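(* Let $\operatorname{Erf}$, $u_k\in\mathbb{Q}[x,y]$ and $v_k\in\mathbb{Q}[y]$ be as defined in the context. For $n,m\in\mathbb{N}_0$ define polynomials $p_{n,m}=p^u_{n,m}+p^v_{n,m}$ and $q_{n,m}=q^u_{n,m}+q^v_{n,m}$ in $\mathbb{Q}[x,y]$ as follows: expand $u_n(x,y)\,y^m=\sum_k \alpha_k(x)y^k$ and $v_n(y)\,y^m=\sum_k\beta_k y^k$ in powers of $y$, and set \[ p^u_{n,m}(x,y)=\sum_k\alpha_k(x)\,u_k(y,x),\qquad q^u_{n,m}(x,y)=-\sum_k\alpha_k(x)\,v_k(x), \] \[ p^v_{n,m}(x,y)=\sum_k\beta_k\frac{u_{k+1}(y,x)}{k+1},\qquad q^v_{n,m}(x,y)=\sum_k\beta_k\frac{y^{k+1}-v_{k+1}(x)}{k+1}. \] Then $p_{n,m}$ has degree $n+m$, $q_{n,m}$ has degree $n+m+1$, and \[ \iint x^ny^me^{-(x-y)^2}\,dx\,dy=p_{n,m}(x,y)e^{-(x-y)^2}+q_{n,m}(x,y)\operatorname{Erf}(x-y), \] in the sense that $\partial_x\partial_y$ of the right-hand side equals $x^ny^me^{-(x-y)^2}$.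
   Context: $\operatorname{Erf}(\xi)=\int_0^\xi e^{-x^2}\,dx$. The polynomials $u_k\in\mathbb{Q}[x,y]$ and $v_k\in\mathbb{Q}[y]$ are defined by $u_0=0$, $v_0=1$, $u_{k+1}(x,y)=y\,u_k(x,y)+\frac k2u_{k-1}(x,y)-\frac{x^k}{2}$, $v_{k+1}(y)=y\,v_k(y)+\frac k2v_{k-1}(y)$ (for $k=0$ the terms with index $-1$ are multiplied by $0$). The notation $u_k(y,x)$ means $u_k$ with its two arguments interchanged, and $v_k(x)$ means $v_k$ evaluated at $x$. *)

(* Defs.v *)
From HB Require Import structures.
From mathcomp Require Import all_boot all_order all_algebra polyXY.
From mathcomp Require Import Rstruct.
From Stdlib Require Rdefinitions.
Set Implicit Arguments. Unset Strict Implicit. Unset Printing Implicit Defensive.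
Import GRing.Theory Num.Theory.

Local Open Scope ring_scope.

(* Convention: a bivariate polynomial P(x,y) in Q[x,y] is represented as
   P : {poly {poly rat}}, where the OUTER indeterminate 'X is y and the inner
   one (the coefficient polynomials) is x, i.e.  P = \sum_k P`_k(x) y^k.
   Hence P`_k is exactly the coefficient of y^k ("expansion in powers of y"). *)
Notation bipoly := {poly {poly rat}}.

Definition Yv : bipoly := 'X.
Definition Xv : bipoly := ('X)%:P.

(* (u_{k-1}, u_k), with the (irrelevant) convention u_{-1} = 0 *)
Fixpoint u_aux (k : nat) : bipoly * bipoly :=
  match k with
  | 0 => (0, 0)
  | k'.+1 => let: (a, b) := u_aux k' in
             (b, Yv * b + (k'%:R / 2%:R)%:P%:P * a - (1 / 2%:R)%:P%:P * Xv ^+ k')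
  end.
Definition u (k : nat) : bipoly := (u_aux k).2.

(* (v_{k-1}, v_k), with v_{-1} = 0 *)
Fixpoint v_aux (k : nat) : {poly rat} * {poly rat} :=
  match k with
  | 0 => (0, 1)
  | k'.+1 => let: (a, b) := v_aux k' in (b, 'X * b + (k'%:R / 2%:R)%:P * a)
  end.
Definition v (k : nat) : {poly rat} := (v_aux k).2.

Definition u_swap (k : nat) : bipoly := swapXY (u k).
Definition v_at_x (k : nat) : bipoly := (v k)%:P.

Definition alpha (n m k : nat) : {poly rat} := (u n * 'X ^+ m)`_k.
Definition beta (n m k : nat) : rat := (v n * 'X ^+ m)`_k.

Definition pu (n m : nat) : bipoly :=
  \sum_(k < size (u n * 'X ^+ m)) (alpha n m k)%:P * u_swap k.
Definition qu (n m : nat) : bipoly :=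
  - \sum_(k < size (u n * 'X ^+ m)) (alpha n m k)%:P * v_at_x k.
Definition pv (n m : nat) : bipoly :=
  \sum_(k < size (v n * 'X ^+ m))
     (beta n m k / k.+1%:R)%:P%:P * u_swap k.+1.
Definition qv (n m : nat) : bipoly :=
  \sum_(k < size (v n * 'X ^+ m))
     (beta n m k / k.+1%:R)%:P%:P * (Yv ^+ k.+1 - v_at_x k.+1).

Definition p (n m : nat) : bipoly := pu n m + pv n m.
Definition q (n m : nat) : bipoly := qu n m + qv n m.

(* Total degree, in the "size" convention of MathComp (size = degree + 1,
   and totsize P = 0 iff P = 0):  totsize P = max over monomials x^i y^j
   with nonzero coefficient of (i + j + 1). *)
Definition totsize (P : bipoly) : nat :=
  \max_(j < size P | (P`_j)%R != 0%R) addn (size (P`_j)%R) j.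

Definition evalXY (P : bipoly) (x y : Rdefinitions.R) : Rdefinitions.R :=
  \sum_(j < size P) \sum_(i < size P`_j) ratr (P`_j)`_i * x ^+ i * y ^+ j.

Local Close Scope ring_scope.
From Stdlib Require Import Reals.
From Coquelicot Require Import Coquelicot.
Local Open Scope R_scope.

Definition Erf (xi : R) : R := RInt (fun t => exp (- t ^ 2)) 0 xi.

(* Main.v *)
Require Import Defs.
From HB Require Import structures.
From mathcomp Require Import all_boot all_order all_algebra polyXY.
From mathcomp Require Import Rstruct.
From Stdlib Require Import Reals.
From Coquelicot Require Import Coquelicot.
Set Implicit Arguments. Unset Strict Implicit. Unset Printing Implicit Defensive.
Import GRing.Theory Num.Theory.
Notation RR := Rdefinitions.R.

Definition Ef (x y : RR) : RR := exp (- (x - y) ^ 2).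

Lemma Erf_deriv z : is_derive Erf z (exp (- z ^ 2)).
Proof.
apply: (is_derive_RInt (fun t => exp (- t ^ 2)) Erf 0 z).
  apply: filter_forall => b; apply: RInt_correct; apply: ex_RInt_continuous => w _.
  apply: continuous_exp_comp.
  apply: continuous_opp; apply: continuous_mult; [apply: continuous_id|].
  apply: continuous_mult; [apply: continuous_id| apply: continuous_const].
apply: continuous_exp_comp.
apply: continuous_opp; apply: continuous_mult; [apply: continuous_id|].
apply: continuous_mult; [apply: continuous_id| apply: continuous_const].
Qed.

Lemma Ef_dx x y : is_derive (fun x' => Ef x' y) x (- (2 * (x - y) * Ef x y)).
Proof. rewrite /Ef; auto_derive => //; unfold Rminus; simpl; ring. Qed.
Lemma Ef_dy x y : is_derive (fun y' => Ef x y') y (2 * (x - y) * Ef x y).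
Proof. rewrite /Ef; auto_derive => //; unfold Rminus; simpl; ring. Qed.
Lemma Erf_dx x y : is_derive (fun x' => Erf (x' - y)) x (Ef x y).
Proof.
have h := is_derive_comp Erf (fun x' => x' - y) x _ 1 (Erf_deriv (x - y)).
have : is_derive (fun x' => x' - y) x 1 by auto_derive => //; ring.
move/h => {}h.
rewrite /Ef; suff -> : exp (- (x - y) ^ 2) = scal 1 (exp (- (x - y) ^ 2)) by exact h.
by rewrite /scal /= /mult /= Rmult_1_l.
Qed.
Lemma Erf_dy x y : is_derive (fun y' => Erf (x - y')) y (- Ef x y).
Proof.
have h := is_derive_comp Erf (fun y' => x - y') y _ (-1) (Erf_deriv (x - y)).
have : is_derive (fun y' => x - y') y (-1) by auto_derive => //; ring.
move/h => {}h.
rewrite /Ef; suff -> : - exp (- (x - y) ^ 2) = scal (-1) (exp (- (x - y) ^ 2)) by exact h.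
by rewrite /scal /= /mult /=; ring.
Qed.

From mathcomp Require Import ring.
Local Open Scope ring_scope.
Local Notation "p ^ f" := (map_poly f p) : ring_scope.

Definition ev2 (P : bipoly) (x y : RR) : RR := (P ^ map_poly ratr).[y%:P].[x].

Lemma ev2D P Q x y : ev2 (P + Q) x y = ev2 P x y + ev2 Q x y.
Proof. by rewrite /ev2 rmorphD !hornerD. Qed.
Lemma ev2M P Q x y : ev2 (P * Q) x y = ev2 P x y * ev2 Q x y.
Proof. by rewrite /ev2 rmorphM !hornerM. Qed.
Lemma ev2B P Q x y : ev2 (P - Q) x y = ev2 P x y - ev2 Q x y.
Proof. by rewrite /ev2 rmorphB !hornerD !hornerN. Qed.
Lemma ev2N P x y : ev2 (- P) x y = - ev2 P x y.
Proof. by rewrite /ev2 rmorphN !hornerN. Qed.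
Lemma ev2X P n x y : ev2 (P ^+ n) x y = ev2 P x y ^+ n.
Proof. by rewrite /ev2 rmorphXn !horner_exp. Qed.
Lemma ev2_sum (I : finType) (F : I -> bipoly) x y :
  ev2 (\sum_i F i) x y = \sum_i ev2 (F i) x y.
Proof. by rewrite /ev2 rmorph_sum !horner_sum. Qed.
Lemma ev2C c x y : ev2 c%:P x y = (c ^ ratr).[x].
Proof. by rewrite /ev2 map_polyC !hornerC. Qed.
Lemma ev2CC c x y : ev2 c%:P%:P x y = ratr c.
Proof. by rewrite ev2C map_polyC hornerC. Qed.
Lemma ev2Y x y : ev2 Yv x y = y.
Proof. by rewrite /ev2 /Yv map_polyX hornerX hornerC. Qed.
Lemma ev2Xv x y : ev2 Xv x y = x.
Proof. by rewrite ev2C map_polyX hornerX. Qed.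
Lemma ev2_swap P x y : ev2 (swapXY P) x y = ev2 P y x.
Proof.
rewrite /ev2 -swapXY_map.
exact: horner2_swapXY.
Qed.
Lemma evalXYE P x y : evalXY P x y = ev2 P x y.
Proof.
rewrite /evalXY /ev2 (horner_coef (P ^ map_poly ratr)) size_map_inj_poly ?rmorph0 //; last exact: map_poly_inj.
rewrite horner_sum.
apply: eq_bigr => j _.
rewrite coef_map /= hornerM -rmorphXn /= hornerC (horner_coef (P`_j ^ ratr)) size_map_poly.
rewrite mulr_suml; apply: eq_bigr => i _.
by rewrite coef_map.
Qed.


Lemma dadd (f g : RR -> RR) t df dg : is_derive f t df -> is_derive g t dg ->
  is_derive (fun t => f t + g t) t (df + dg).
Proof. exact: is_derive_plus. Qed.
Lemma dsub (f g : RR -> RR) t df dg : is_derive f t df -> is_derive g t dg ->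
  is_derive (fun t => f t - g t) t (df - dg).
Proof. exact: is_derive_minus. Qed.
Lemma dmul (f g : RR -> RR) t df dg : is_derive f t df -> is_derive g t dg ->
  is_derive (fun t => f t * g t) t (df * g t + f t * dg).
Proof. move=> hf hg; exact: (is_derive_mult f g t df dg hf hg Rmult_comm). Qed.
Lemma dscal (f : RR -> RR) c t df : is_derive f t df ->
  is_derive (fun t => c * f t) t (c * df).
Proof. exact: is_derive_scal. Qed.
Lemma dcst (a : RR) t : is_derive (fun _ => a) t 0.
Proof. exact: is_derive_const. Qed.
Lemma did t : is_derive (fun t : RR => t) t 1.
Proof. exact: is_derive_id. Qed.
Lemma dext (f g : RR -> RR) t l : is_derive f t l -> (forall s, f s = g s) -> is_derive g t l.
Proof. by move=> h e; apply: (is_derive_ext f g t l e h). Qed.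
Lemma dval (f : RR -> RR) t l l' : is_derive f t l -> l = l' -> is_derive f t l'.
Proof. by move=> h <-. Qed.
Lemma dpow n t : is_derive (fun t : RR => t ^+ n) t (n%:R * t ^+ n.-1).
Proof.
have := is_derive_pow (fun t => t) n t 1 (is_derive_id t).
move=> h; apply: (is_derive_ext (fun s => pow s n)) => [s|]; first by rewrite RpowE.
by apply: dval h _; rewrite RpowE INRE !RmultE mulr1.
Qed.
Lemma dsum K (F : nat -> RR -> RR) dF t :
  (forall i, is_derive (F i) t (dF i)) ->
  is_derive (fun t => \sum_(i < K) F i t) t (\sum_(i < K) dF i).
Proof.
move=> h; elim: K => [|K IH].
  by apply: dext (dval (dcst 0 t) _) _ => [|s]; rewrite big_ord0.
apply: dext (dval (dadd IH (h K)) _) _ => [|s]; by rewrite big_ord_recr.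
Qed.

Lemma key (f : nat -> RR -> RR) (V : nat -> RR) (c : RR) :
 (forall t, f 0%N t = 0) -> (forall t, f 1%N t = -(1/2)) ->
 (forall k t, f k.+2 t = c * f k.+1 t + (k.+1)%:R / 2 * f k t - 1/2 * t ^+ k.+1) ->
 V 0%N = 1 -> V 1%N = c -> (forall k, V k.+2 = c * V k.+1 + (k.+1)%:R / 2 * V k) ->
 forall k t, is_derive (f k) t (t ^+ k + 2 * (t - c) * f k t - V k).
Proof.
move=> f0 f1 fS V0 V1 VS.
suff H : forall k t, is_derive (f k) t (t ^+ k + 2 * (t - c) * f k t - V k) /\
                     is_derive (f k.+1) t (t ^+ k.+1 + 2 * (t - c) * f k.+1 t - V k.+1).
  by move=> k t; case: (H k t).
elim=> [|k IH] t.
  split.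
    apply: dext (dval (dcst 0 t) _) _ => [|s]; last by rewrite f0.
    by rewrite f0 V0 expr0; ring.
  apply: dext (dval (dcst (-(1/2)) t) _) _ => [|s]; last by rewrite f1.
  by rewrite f1 V1 expr1; field.
case: (IH t) => h0 h1; split => //.
apply: dext (dval (dsub (dadd (dscal c h1) (dscal ((k.+1)%:R / 2) h0))
   (dscal (1/2) (dpow k.+1 t))) _) _ => [|s]; last by rewrite fS.
by rewrite fS VS /= !exprS; field.
Qed.

Lemma two : (IZR 2) = 2 :> RR.
Proof. have -> : IZR 2 = Rplus 1 1 by rewrite /= /IZR /IPR /=. by []. Qed.
Lemma Efdx x y : is_derive (fun x' => Ef x' y) x (- (2 * (x - y) * Ef x y)).
Proof. by apply: dval (Ef_dx x y) _; rewrite RoppE !RmultE RminusE two. Qed.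
Lemma Efdy x y : is_derive (fun y' => Ef x y') y (2 * (x - y) * Ef x y).
Proof. by apply: dval (Ef_dy x y) _; rewrite !RmultE RminusE two. Qed.
Lemma Erfdx x y : is_derive (fun x' => Erf (x' - y)) x (Ef x y).
Proof. exact: Erf_dx. Qed.
Lemma Erfdy x y : is_derive (fun y' => Erf (x - y')) y (- Ef x y).
Proof. exact: Erf_dy. Qed.

Definition um1 k := (u_aux k).1.
Lemma u_rec k : u k.+1 = Yv * u k + (k%:R / 2%:R)%:P%:P * um1 k - (1 / 2%:R)%:P%:P * Xv ^+ k.
Proof. by rewrite /u /um1 /=; case: (u_aux k). Qed.
Lemma um1S k : um1 k.+1 = u k.
Proof. by rewrite /u /um1 /=; case: (u_aux k). Qed.
Lemma u0 : u 0 = 0. Proof. by []. Qed.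
Lemma um10 : um1 0 = 0. Proof. by []. Qed.
Definition vm1 k := (v_aux k).1.
Lemma v_rec k : v k.+1 = 'X * v k + (k%:R / 2%:R)%:P * vm1 k.
Proof. by rewrite /v /vm1 /=; case: (v_aux k). Qed.
Lemma vm1S k : vm1 k.+1 = v k.
Proof. by rewrite /v /vm1 /=; case: (v_aux k). Qed.
Lemma v0 : v 0 = 1. Proof. by []. Qed.
Lemma vm10 : vm1 0 = 0. Proof. by []. Qed.

Definition Uf k x y := ev2 (u k) x y.
Definition Vf k (t : RR) := (v k ^ ratr).[t].

Lemma ratr_half (k : nat) : ratr (k%:R / 2%:R : rat) = k%:R / 2 :> RR.
Proof. by rewrite fmorph_div !rmorph_nat. Qed.

Lemma ev20 x y : ev2 0 x y = 0.
Proof. by rewrite /ev2 rmorph0 !horner0. Qed.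
Lemma ratr1' : ratr 1 = 1 :> RR. Proof. exact: rmorph1. Qed.
Lemma ratr_half1 : ratr (1 / 2%:R : rat) = 1 / 2 :> RR.
Proof. by rewrite fmorph_div rmorph1 rmorph_nat. Qed.
Lemma Uf0 x y : Uf 0 x y = 0.
Proof. by rewrite /Uf u0 ev20. Qed.
Lemma Uf1 x y : Uf 1 x y = - (1/2).
Proof.
rewrite /Uf u_rec u0 um10 ev2B ev2D !ev2M !ev2CC ?ev2X ?ev2Xv !rmorph0.
by rewrite ratr1' ratr_half1; ring.
Qed.
Lemma UfS k x y : Uf k.+2 x y = y * Uf k.+1 x y + (k.+1)%:R / 2 * Uf k x y - 1/2 * x ^+ k.+1.
Proof.
rewrite /Uf u_rec um1S ev2B ev2D !ev2M !ev2CC ev2X ev2Xv ev2Y.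
by rewrite !fmorph_div !rmorph_nat rmorph1.
Qed.
Lemma Vf0 t : Vf 0 t = 1.
Proof. by rewrite /Vf v0 rmorph1 hornerC. Qed.
Lemma Vf1 t : Vf 1 t = t.
Proof. by rewrite /Vf v_rec v0 vm10 mulr0 addr0 mulr1 map_polyX hornerX. Qed.
Lemma ratr_polyC (c : rat) (t : RR) : ((c%:P) ^ ratr).[t] = ratr c.
Proof. by rewrite map_polyC hornerC. Qed.
Lemma VfS k t : Vf k.+2 t = t * Vf k.+1 t + (k.+1)%:R / 2 * Vf k t.
Proof.
rewrite /Vf v_rec vm1S rmorphD rmorphM rmorphM /= map_polyX hornerD !hornerM hornerX ratr_polyC.
by rewrite !fmorph_div !rmorph_nat.
Qed.

Lemma dU_x n x y : is_derive (fun x' => Uf n x' y) x (x ^+ n + 2 * (x - y) * Uf n x y - Vf n y).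
Proof.
apply: (key (f := fun k t => Uf k t y) (V := fun k => Vf k y)) => //.
- by move=> t; rewrite Uf0.
- by move=> t; rewrite Uf1.
- by move=> k t; rewrite UfS.
- by rewrite Vf0.
- by rewrite Vf1.
- by move=> k; rewrite VfS.
Qed.
Lemma dUs_y n x y : is_derive (fun y' => Uf n y' x) y (y ^+ n + 2 * (y - x) * Uf n y x - Vf n x).
Proof. exact: dU_x. Qed.

Definition Ak n m k (x : RR) := (alpha n m k ^ ratr).[x].
Definition bk n m k : RR := ratr (beta n m k / k.+1%:R).

Lemma ev_p n m x y : ev2 (p n m) x y =
  \sum_(k < size (u n * 'X ^+ m)) Ak n m k x * Uf k y x +
  \sum_(k < size (v n * 'X ^+ m)) bk n m k * Uf k.+1 y x.
Proof.
rewrite /p /pu /pv ev2D !ev2_sum; congr (_ + _); apply: eq_bigr => k _;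
  by rewrite ev2M ?ev2CC ?ev2C /u_swap ev2_swap.
Qed.

Lemma ev_q n m x y : ev2 (q n m) x y =
  - \sum_(k < size (u n * 'X ^+ m)) Ak n m k x * Vf k x +
  \sum_(k < size (v n * 'X ^+ m)) bk n m k * (y ^+ k.+1 - Vf k.+1 x).
Proof.
rewrite /q /qu /qv ev2D ev2N !ev2_sum; congr (- _ + _); apply: eq_bigr => k _.
  by rewrite ev2M /v_at_x !ev2C.
by rewrite ev2M ev2CC ev2B ev2X ev2Y /v_at_x ev2C.
Qed.

Lemma sumA n m x y : \sum_(k < size (u n * 'X ^+ m)) Ak n m k x * y ^+ k = Uf n x y * y ^+ m.
Proof.
have -> : Uf n x y * y ^+ m = ev2 (u n * Yv ^+ m) x y by rewrite ev2M ev2X ev2Y.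
rewrite -evalXYE /evalXY; apply: eq_bigr => k _.
rewrite /Ak /alpha (horner_coef (_ ^ ratr)) size_map_poly mulr_suml; apply: eq_bigr => i _.
by rewrite coef_map.
Qed.

Lemma sumB n m y : \sum_(k < size (v n * 'X ^+ m)) bk n m k * (k.+1)%:R * y ^+ k = Vf n y * y ^+ m.
Proof.
have -> : Vf n y * y ^+ m = ((v n * 'X ^+ m) ^ ratr).[y].
  by rewrite rmorphM rmorphXn /= map_polyX hornerM hornerXn.
rewrite (horner_coef (_ ^ ratr)) size_map_poly; apply: eq_bigr => k _.
rewrite coef_map /bk /beta /= fmorph_div rmorph_nat divfK //.
by rewrite pnatr_eq0.
Qed.

Lemma main_y n m x y : is_derive (fun y' => ev2 (p n m) x y' * Ef x y' + ev2 (q n m) x y' * Erf (x - y')) y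
  (y ^+ m * (Uf n x y * Ef x y + Vf n y * Erf (x - y))).
Proof.
set K1 := size (u n * 'X ^+ m); set K2 := size (v n * 'X ^+ m).
pose F1 k y' := Ak n m k x * (Uf k y' x * Ef x y' - Vf k x * Erf (x - y')).
pose F2 k y' := bk n m k * (Uf k.+1 y' x * Ef x y' + (y' ^+ k.+1 - Vf k.+1 x) * Erf (x - y')).
have h1 : forall k, is_derive (F1 k) y (Ak n m k x * y ^+ k * Ef x y).
  move=> k; apply: dval (dscal (Ak n m k x) (dsub (dmul (dUs_y k x y) (Efdy x y))
                  (dscal (Vf k x) (Erfdy x y)))) _.
  ring.
have h2 : forall k, is_derive (F2 k) y (bk n m k * (k.+1)%:R * y ^+ k * Erf (x - y)).
  move=> k; apply: dval (dscal (bk n m k) (dadd (dmul (dUs_y k.+1 x y) (Efdy x y))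
                  (dmul (dsub (dpow k.+1 y) (dcst (Vf k.+1 x) y)) (Erfdy x y)))) _.
  rewrite /= exprS; ring.
apply: dext (dval (dadd (dsum K1 h1) (dsum K2 h2)) _) _.
  rewrite -!mulr_suml.
  have -> : \sum_(i < K1) Ak n m i x * y ^+ i = Uf n x y * y ^+ m by exact: sumA.
  have -> : \sum_(i < K2) bk n m i * (i.+1)%:R * y ^+ i = Vf n y * y ^+ m by exact: sumB.
  ring.
move=> s; rewrite ev_p ev_q /F1 /F2.
have -> : \sum_(i < K1) Ak n m i x * (Uf i s x * Ef x s - Vf i x * Erf (x - s)) =
   (\sum_(i < K1) Ak n m i x * Uf i s x) * Ef x s - (\sum_(i < K1) Ak n m i x * Vf i x) * Erf (x - s).
  by rewrite !mulr_suml -sumrB; apply: eq_bigr => i _; ring.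
have -> : \sum_(i < K2) bk n m i * (Uf i.+1 s x * Ef x s + (s ^+ i.+1 - Vf i.+1 x) * Erf (x - s)) =
   (\sum_(i < K2) bk n m i * Uf i.+1 s x) * Ef x s + (\sum_(i < K2) bk n m i * (s ^+ i.+1 - Vf i.+1 x)) * Erf (x - s).
  by rewrite !mulr_suml -big_split; apply: eq_bigr => i _ /=; ring.
ring.
Qed.

Lemma main_x n m x y : is_derive (fun x' => y ^+ m * (Uf n x' y * Ef x' y + Vf n y * Erf (x' - y))) x
  (x ^+ n * y ^+ m * Ef x y).
Proof.
apply: dval (dscal (y ^+ m) (dadd (dmul (dU_x n x y) (Efdx x y)) (dscal (Vf n y) (Erfdx x y)))) _.
ring.
Qed.

Lemma analytic_part (n m : nat) :
  exists G : RR -> RR -> RR,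
    (forall x y : RR,
       is_derive (fun y' : RR => (evalXY (p n m) x y' * exp (- (x - y') ^ 2)
                                 + evalXY (q n m) x y' * Erf (x - y'))%R)
                 y (G x y)) /\
    (forall x y : RR,
       is_derive (fun x' : RR => G x' y) x
                 (x ^ n * y ^ m * exp (- (x - y) ^ 2))%R).
Proof.
exists (fun x y => y ^+ m * (Uf n x y * Ef x y + Vf n y * Erf (x - y))); split.
  move=> x y; apply: dext (main_y n m x y) _ => s.
  by rewrite !evalXYE.
move=> x y; apply: dval (main_x n m x y) _.
by rewrite (RpowE x) (RpowE y).
Qed.

From mathcomp Require Import zify.

Lemma coef_nz_lt (T : nzRingType) (c : {poly T}) i : c`_i != 0 -> (i < size c)%nat.
Proof. move=> nz; rewrite ltnNge; apply/negP => /(nth_default 0) h; by rewrite h eqxx in nz. Qed.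

Lemma sum_nz (T : zmodType) n (F : 'I_n -> T) : \sum_(k < n) F k != 0 -> exists k, F k != 0.
Proof.
move=> h; case: (pickP (fun k => F k != 0)) => [k hk|h0]; first by exists k.
by rewrite big1 ?eqxx in h => // k _; apply/eqP; move: (h0 k) => /negbFE.
Qed.

Lemma mul_nz (T : comRingType) (a b : T) : a * b != 0 -> a != 0 /\ b != 0.
Proof.
move=> h; split; apply/negP => /eqP e; by rewrite e ?mul0r ?mulr0 eqxx in h.
Qed.

Unset Implicit Arguments.
Definition tb (P : bipoly) (N : nat) := forall i j, (P`_j)`_i != 0 -> (i + j < N)%nat.

Lemma tb_le P N N' : tb P N -> (N <= N')%nat -> tb P N'.
Proof. move=> h le i j /h; lia. Qed.
Lemma tb0 N : tb 0 N.
Proof. by move=> i j; rewrite !coef0 eqxx. Qed.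
Lemma tbD P Q N : tb P N -> tb Q N -> tb (P + Q) N.
Proof.
move=> hP hQ i j; rewrite !coefD; case: (eqVneq (P`_j)`_i 0) => [e|/hP //].
by rewrite e add0r => /hQ.
Qed.
Lemma tbN P N : tb P N -> tb (- P) N.
Proof. by move=> h i j; rewrite !coefN oppr_eq0 => /h. Qed.
Lemma tbB P Q N : tb P N -> tb Q N -> tb (P - Q) N.
Proof. by move=> hP hQ; apply: tbD => //; apply: tbN. Qed.
Lemma tb_sum K (F : 'I_K -> bipoly) N : (forall k, tb (F k) N) -> tb (\sum_(k < K) F k) N.
Proof.
move=> h i j; rewrite !coef_sum => /sum_nz [k hk]; exact: h _ _ _ hk.
Qed.
Lemma tbM P Q N1 N2 : tb P N1 -> tb Q N2 -> tb (P * Q) (N1 + N2).-1.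
Proof.
move=> hP hQ i j; rewrite coefM coef_sum => /sum_nz [k /=].
rewrite coefM => /sum_nz [l /=] /mul_nz [h1 h2].
have := hP _ _ h1; have := hQ _ _ h2.
have := ltn_ord k; have := ltn_ord l; lia.
Qed.
Lemma tbC (c : {poly rat}) : tb c%:P (size c).
Proof.
move=> i [|j]; rewrite coefC /=; last by rewrite coef0 eqxx.
by move/coef_nz_lt; rewrite addn0.
Qed.
Lemma tbCC (c : rat) : tb c%:P%:P 1.
Proof.
refine (tb_le _ _ _ (tbC c%:P) _); by rewrite size_polyC; case: (c != 0).
Qed.
Lemma tbXn P k : tb P 2 -> tb (P ^+ k) k.+1.
Proof.
move=> h; elim: k => [|k IH]; first by rewrite expr0 -[1]/(1%:P%:P); exact: tbCC.
by rewrite exprS; refine (tb_le _ _ _ (tbM _ _ _ _ h IH) _).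
Qed.
Lemma tb_swap P N : tb P N -> tb (swapXY P) N.
Proof. by move=> h i j; rewrite coef_swapXY => /h; lia. Qed.

Lemma tbXv : tb Xv 2.
Proof. by refine (tb_le _ _ _ (tbC _) _); rewrite size_polyX. Qed.
Lemma tbY : tb Yv 2.
Proof. by have := tb_swap _ _ tbXv; rewrite /Xv swapXY_polyC map_polyX. Qed.
Lemma tb_u k : tb (u k) k /\ tb (u k.+1) k.+1.
Proof.
elim: k => [|k [IH0 IH1]].
  split; first exact: tb0.
  rewrite u_rec u0 um10 !mulr0 ?add0r.
  refine (tbN _ _ _).
  exact: (tb_le _ _ _ (tbM _ _ _ _ (tbCC _) (tbXn _ 0 tbXv))).
split => //; rewrite u_rec um1S.
apply: tbB; first apply: tbD.
- exact: (tb_le _ _ _ (tbM _ _ _ _ tbY IH1)).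
- by refine (tb_le _ _ _ (tbM _ _ _ _ (tbCC _) IH0) _); lia.
- by refine (tb_le _ _ _ (tbM _ _ _ _ (tbCC _) (tbXn _ k.+1 tbXv)) _).
Qed.

Lemma v_size k : (size (v k) = k.+1 /\ lead_coef (v k) = 1) /\
                 (size (v k.+1) = k.+2 /\ lead_coef (v k.+1) = 1).
Proof.
elim: k => [|k [[s0 l0] [s1 l1]]].
  by rewrite v_rec v0 vm10 mulr0 addr0 mulr1 size_polyX lead_coefX size_poly1 lead_coef1.
split => //; rewrite v_rec vm1S mulrC.
have nz : v k.+1 != 0 by rewrite -size_poly_eq0 s1.
pose A := (((k.+1)%:R / 2%:R)%:P * v k : {poly rat}).
pose B := (v k.+1 * 'X : {poly rat}).
have hs : (size A < size B)%nat.
  rewrite size_mulX // s1; apply: leq_ltn_trans (size_polyMleq _ _) _.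
  rewrite size_polyC s0; case: (_ != 0) => /=; lia.
by rewrite size_polyDl // lead_coefDl // size_mulX // s1 lead_coefMX l1.
Qed.

Lemma tb_zero P N i j : tb P N -> (N <= i + j)%nat -> (P`_j)`_i = 0.
Proof. move=> h le; apply/eqP; apply/negPn/negP => /h; lia. Qed.
Lemma tb_coef0 P N j : tb P N -> (N <= j)%nat -> P`_j = 0.
Proof. move=> h le; apply/polyP => i; rewrite coef0; apply: (tb_zero _ N) => //; lia. Qed.

Lemma tb_um1 k : tb (um1 k) k.
Proof. case: k => [|k]; [rewrite um10; exact: tb0|rewrite um1S]. exact: (tb_le _ _ _ (tb_u k).1). Qed.

Lemma usw_top k : (u_swap k.+1)`_k = (-(1/2))%:P.
Proof.
apply/polyP => j; rewrite /u_swap coef_swapXY coefC u_rec !coefB !coefD /Yv coefXM !coefCM.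
rewrite -rmorphXn /= coefC.
case: j => [|j] /=.
  rewrite coef0 coefXn eqxx (tb_zero _ k _ _ (tb_um1 k)) ?addn0 //.
  by rewrite mulr0 add0r mulr1.
rewrite (tb_zero _ k _ _ (tb_u k).1); last lia.
rewrite (tb_zero _ k _ _ (tb_um1 k)); last lia.
by rewrite coef0 mulr0 addr0 subr0.
Qed.

Lemma sizeK2 n m : size (v n * 'X ^+ m) = (n + m).+1.
Proof.
have [[s l] _] := v_size n.
rewrite size_mulXn ?s; first lia.
by rewrite -size_poly_eq0 s.
Qed.

Lemma betaN n m : beta n m (n + m) = 1.
Proof.
have [[s l] _] := v_size n.
rewrite /beta coefMXn ltnNge leq_addl /= addnK.
by rewrite -l lead_coefE s.
Qed.

Lemma tb_uX n m : tb (u n * 'X ^+ m) (n + m).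
Proof. refine (tb_le _ _ _ (tbM _ _ _ _ (tb_u n).1 (tbXn _ m tbY)) _); lia. Qed.

Lemma alpha_bd n m k : alpha n m k != 0 -> (size (alpha n m k) + k <= n + m)%nat.
Proof.
move=> nz.
have h : (alpha n m k)`_(size (alpha n m k)).-1 != 0 by rewrite -lead_coefE lead_coef_eq0.
have := tb_uX n m _ _ h; have : (0 < size (alpha n m k))%nat by rewrite size_poly_gt0.
lia.
Qed.

Lemma tb_pu n m : tb (pu n m) (n + m).
Proof.
apply: tb_sum => k.
case: (eqVneq (alpha n m k) 0) => [->|nz]; first by rewrite mul0r; exact: tb0.
refine (tb_le _ _ _ (tbM _ _ _ _ (tbC _) (tb_swap _ _ (tb_u k).1)) _).
have := alpha_bd _ _ _ nz; lia.
Qed.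

Lemma tb_qu n m : tb (qu n m) (n + m).+1.
Proof.
apply: tbN; apply: tb_sum => k.
case: (eqVneq (alpha n m k) 0) => [->|nz]; first by rewrite mul0r; exact: tb0.
have [[s _] _] := v_size k.
refine (tb_le _ _ _ (tbM _ _ _ _ (tbC _) (tbC (v k))) _).
rewrite s; have := alpha_bd _ _ _ nz; lia.
Qed.

Lemma tb_pv_term (c : rat) k : tb (c%:P%:P * u_swap k.+1) k.+1.
Proof. exact: (tb_le _ _ _ (tbM _ _ _ _ (tbCC c) (tb_swap _ _ (tb_u k.+1).1))). Qed.

Lemma tb_qv_term (c : rat) k : tb (c%:P%:P * (Yv ^+ k.+1 - v_at_x k.+1)) k.+2.
Proof.
have [_ [s _]] := v_size k.
refine (tb_le _ _ _ (tbM _ _ _ _ (tbCC c) (tbB _ _ _ (tbXn _ k.+1 tbY) _)) _) => //.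
by rewrite /v_at_x -s; exact: tbC.
Qed.

Lemma tb_p n m : tb (p n m) (n + m).+1.
Proof.
apply: tbD; first exact: (tb_le _ _ _ (tb_pu n m)).
apply: tb_sum => k; refine (tb_le _ _ _ (tb_pv_term _ _) _).
have := ltn_ord k; have := sizeK2 n m; lia.
Qed.

Lemma tb_q n m : tb (q n m) (n + m).+2.
Proof.
apply: tbD; first exact: (tb_le _ _ _ (tb_qu n m)).
apply: tb_sum => k; refine (tb_le _ _ _ (tb_qv_term _ _) _).
have := ltn_ord k; have := sizeK2 n m; lia.
Qed.

Lemma pv_coef n m : (pv n m)`_(n + m) = ((beta n m (n + m) / (n + m).+1%:R) * (-(1/2)))%:P.
Proof.
have hlt : leq (S (addn n m)) (size (v n * 'X ^+ m)) by rewrite sizeK2.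
rewrite /pv coef_sum (bigD1 (Ordinal hlt)) //= big1 ?addr0.
  by rewrite coefCM usw_top -polyCM.
move=> k hk; apply: (tb_coef0 _ _ _ (tb_pv_term _ _)).
have hk' : (k : nat) != n + m by apply: contra hk => /eqP e; apply/eqP; apply: val_inj.
have hk2 : (k < (n+m).+1)%nat := leq_trans (ltn_ord k) (eq_leq (sizeK2 n m)).
move/eqP: hk'; lia.
Qed.

Lemma qv_coef n m : (qv n m)`_(n + m).+1 = (beta n m (n + m) / (n + m).+1%:R)%:P.
Proof.
have hlt : leq (S (addn n m)) (size (v n * 'X ^+ m)) by rewrite sizeK2.
rewrite /qv coef_sum (bigD1 (Ordinal hlt)) //= big1 ?addr0.
  by rewrite coefCM coefB /Yv coefXn eqxx /v_at_x coefC /= subr0 mulr1.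
move=> k hk; apply: (tb_coef0 _ _ _ (tb_qv_term _ _)).
have hk' : (k : nat) != n + m by apply: contra hk => /eqP e; apply/eqP; apply: val_inj.
have hk2 : (k < (n+m).+1)%nat := leq_trans (ltn_ord k) (eq_leq (sizeK2 n m)).
move/eqP: hk'; lia.
Qed.

Lemma p_coef n m : (p n m)`_(n + m) = ((1 / (n + m).+1%:R) * (-(1/2)))%:P.
Proof. by rewrite /p coefD (tb_coef0 _ _ _ (tb_pu n m)) // add0r pv_coef betaN. Qed.
Lemma q_coef n m : (q n m)`_(n + m).+1 = (1 / (n + m).+1%:R)%:P.
Proof. by rewrite /q coefD (tb_coef0 _ _ _ (tb_qu n m)) // add0r qv_coef betaN. Qed.

Lemma totsize_le (P : bipoly) N : tb P N -> (totsize P <= N)%nat.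
Proof.
move=> h; apply/bigmax_leqP => j nz.
have h2 : (P`_j)`_(size (P`_j)).-1 != 0 by rewrite -lead_coefE lead_coef_eq0.
have := h _ _ h2; have : leq 1 (size (P`_j)) by rewrite size_poly_gt0.
rewrite /=; lia.
Qed.

Lemma totsize_ge (P : bipoly) (j : nat) : P`_j != 0 -> leq (addn (size (P`_j)) j) (totsize P).
Proof.
move=> nz; have hj : (j < size P)%nat by apply: coef_nz_lt.
exact: (leq_bigmax_cond (Ordinal hj) nz).
Qed.

Lemma deg_p n m : totsize (p n m) = (n + m).+1.
Proof.
have c_nz : (1 / (n + m).+1%:R * - (1 / 2) : rat) != 0.
  by rewrite mulf_neq0 // ?oppr_eq0 ?mulf_neq0 ?invr_eq0 ?pnatr_eq0.
have nz : (p n m)`_(n + m) != 0 by rewrite p_coef polyC_eq0.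
have s1 : size ((p n m)`_(n + m)) = 1%nat by rewrite p_coef size_polyC c_nz.
apply/eqP; rewrite eqn_leq (totsize_le _ _ (tb_p n m)) /=.
by have := totsize_ge _ _ nz; rewrite s1 add1n.
Qed.

Lemma deg_q n m : totsize (q n m) = (n + m).+2.
Proof.
have c_nz : (1 / (n + m).+1%:R : rat) != 0.
  by rewrite mulf_neq0 // ?invr_eq0 ?pnatr_eq0.
have nz : (q n m)`_(n + m).+1 != 0 by rewrite q_coef polyC_eq0.
have s1 : size ((q n m)`_(n + m).+1) = 1%nat by rewrite q_coef size_polyC c_nz.
apply/eqP; rewrite eqn_leq (totsize_le _ _ (tb_q n m)) /=.
by have := totsize_ge _ _ nz; rewrite s1 add1n.
Qed.

Local Close Scope ring_scope.

Theorem corollary1 (n m : nat) :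
  totsize (p n m) = (n + m).+1 /\
  totsize (q n m) = (n + m).+2 /\
  exists G : R -> R -> R,
    (forall x y : R,
       is_derive (fun y' : R => (evalXY (p n m) x y' * exp (- (x - y') ^ 2)
                                 + evalXY (q n m) x y' * Erf (x - y'))%R)
                 y (G x y)) /\
    (forall x y : R,
       is_derive (fun x' : R => G x' y) x
                 (x ^ n * y ^ m * exp (- (x - y) ^ 2))%R).
Proof.
split; first exact: deg_p.
split; first exact: deg_q.
exact: analytic_part.
Qed.
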